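(* Let $\Gamma$ be a lattice with periodic boundary conditions as below, let $\mathcal{X}$ be an artificial boundary, and let $\mathcal{E}\subseteq C_2(\Gamma)$ be a set of faces with $\mathcal{E}\cap\mathcal{X}=\emptyset$. Suppose $M$ is an $X$-type logical operator equivalent to one of the $\bar X_i$ (i.e. $M\bar X_i$ is an $X$-type stabilizer for some $i$) with $\mathrm{supp}(M)\subseteq\mathcal{E}$. Then $\mathcal{E}\cup\mathcal{X}$ is a cut set of $\Gamma$.
   Context: $\Gamma$ is a finite, connected three-dimensional cell complex without boundary (periodic boundary conditions), with edges $C_1(\Gamma)$, faces $C_2(\Gamma)$, volumes $C_3(\Gamma)$; every face lies in the boundary of exactly two distinct volumes and the dual complex is connected. $\partial(\nu)$ is the set of boundary faces of volume $\nu$ and $\iota(e)$ the set of faces containing edge $e$. The 3D toric code on $\Gamma$ has one qubit per face, stabilizer group generated by $B_e=\prod_{f\in\iota(e)}Z_f$ and $A_\nu=\prod_{f\in\partial(\nu)}X_f$, and encodes $k$ logical qubits; a logical operator is a Pauli operator commuting with all stabilizers but not in the stabilizer group (up to phase); $X_S=\prod_{f\in S}X_f$ and $\mathrm{supp}(P)$ is the set of faces where $P$ acts nontrivially. Fix $X$-type logical operators $\bar X_1,\dots,\bar X_k$, one per logical qubit. An artificial boundary is a set $\mathcal{X}=\bigcup_{i=1}^k\mathrm{supp}(\bar X_i^r)$, where each $\bar X_i^r$ is an $X$-type operator with $\bar X_i^r\bar X_i$ an $X$-type stabilizer, such that $\mathcal{X}$ contains no nonempty set $S$ with $X_S$ a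 stabilizer. A face path is a sequence of faces $\rho=(f_1,\dots,f_m)$ with pairwise distinct volumes $\Lambda(\rho)=(\nu_1,\dots,\nu_{m-1})$, $f_i,f_{i+1}\in\partial(\nu_i)$. A set of faces $K$ is a cut set of $\Gamma$ if there exist volumes $\nu,\nu'$ such that every face path $\rho$ with $f_1\in\partial(\nu)$, $f_m\in\partial(\nu')$ and $\nu,\nu'\notin\Lambda(\rho)$ meets $K$. *)

(* Defs.v *)
From mathcomp Require Import all_boot.
Set Implicit Arguments. Unset Strict Implicit. Unset Printing Implicit Defensive.

Section Complex.
(* P = vertices, E = edges C_1, F = faces C_2, V = volumes C_3.
   dEP e = vertices of the boundary of e, dFE f = edges of the boundary of f,
   dVF v = boundary faces of volume v  (written \partial(v) in the paper). *)
Variables (P E F V : finType).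
Variables (dEP : E -> {set P}) (dFE : F -> {set E}) (dVF : V -> {set F}).

Definition iota (e : E) : {set F} := [set f | e \in dFE f].

(* Cellular structure is recorded through the Z/2 chain
   complex condition (boundary of boundary = 0). *)
Definition closed_cell_complex3 : Prop :=
  [/\ (forall (f : F) (p : P), ~~ odd #|[set e in dFE f | p \in dEP e]|),
      (forall (v : V) (e : E), ~~ odd #|[set f in dVF v | e \in dFE f]|),
      (forall f : F, #|[set v | f \in dVF v]| = 2),
      (forall p q : P,
          connect (fun a b => [exists e, (a \in dEP e) && (b \in dEP e)]) p q)
    & (forall v w : V,
          connect (fun a b => [exists f, (f \in dVF a) && (f \in dVF b)]) v w)].

(* X-type Pauli operators X_S (up to phase) are identified with their support S.
   Product of X-type operators = symmetric difference of supports. *)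
Definition symdiff (A B : {set F}) : {set F} := (A :\: B) :|: (B :\: A).

(* X_S is a stabilizer: S is an F_2-combination of the volume boundaries,
   i.e. X_S = prod_{v in W} A_v for some set W of volumes. *)
Definition bnd_of (W : {set V}) : {set F} :=
  [set f | odd #|[set v in W | f \in dVF v]|].
Definition is_xstab (S : {set F}) : Prop := exists W : {set V}, S = bnd_of W.

(* X_S commutes with every stabilizer generator (it always commutes with the
   A_v; it commutes with B_e iff |S cap iota(e)| is even). *)
Definition xcommutes (S : {set F}) : Prop :=
  forall e : E, ~~ odd #|S :&: iota e|.

Definition xlogical (S : {set F}) : Prop := xcommutes S /\ ~ is_xstab S.

Definition xprod (k : nat) (Xb : 'I_k -> {set F}) (J : {set 'I_k}) : {set F} :=
  [set f | odd #|[set i in J | f \in Xb i]|].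

Definition xlogical_basis (k : nat) (Xb : 'I_k -> {set F}) : Prop :=
  [/\ (forall i, xcommutes (Xb i)),
      (forall J : {set 'I_k}, J != set0 -> ~ is_xstab (xprod Xb J))
    & (forall S, xlogical S -> exists J : {set 'I_k},
          is_xstab (symdiff S (xprod Xb J)))].

Definition artificial_boundary (k : nat) (Xb : 'I_k -> {set F})
    (Xset : {set F}) : Prop :=
  exists Xr : 'I_k -> {set F},
    [/\ (forall i, is_xstab (symdiff (Xr i) (Xb i))),
        Xset = \bigcup_(i < k) Xr i
      & (forall S : {set F}, S \subset Xset -> S != set0 -> ~ is_xstab S)].

(* A face path (f_1, ..., f_m) is given by its first face f, the remaining
   faces fs = (f_2..f_m) and the volumes vs = (v_1..v_{m-1}) with
   f_i, f_{i+1} in dVF v_i. *)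
Fixpoint fpath_rel (f : F) (fs : seq F) (vs : seq V) : bool :=
  match fs, vs with
  | [::], [::] => true
  | g :: fs', v :: vs' => [&& f \in dVF v, g \in dVF v & fpath_rel g fs' vs']
  | _, _ => false
  end.
Definition face_path (f : F) (fs : seq F) (vs : seq V) : bool :=
  fpath_rel f fs vs && uniq vs.

Definition cut_set (K : {set F}) : Prop :=
  exists v v' : V,
    forall (f : F) (fs : seq F) (vs : seq V),
      face_path f fs vs -> f \in dVF v -> last f fs \in dVF v' ->
      v \notin vs -> v' \notin vs ->
      (f \in K) || has (fun g => g \in K) fs.

End Complex.

(* Main.v *)
Require Import Defs.
From mathcomp Require Import all_boot.

Lemma odd_symdiff (T : finType) (A B : {set T}) :
  odd #|(A :\: B) :|: (B :\: A)| = odd #|A| (+) odd #|B|.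
Proof.
have h1 := cardsID B A. have h2 := cardsID A B.
have h0 : (A :\: B) :&: (B :\: A) = set0.
  apply/setP => x; rewrite !inE; by case: (x \in A); case: (x \in B).
rewrite cardsU h0 cards0 subn0 -h1 -h2 setIC !oddD.
by case: (odd _); case: (odd _); case: (odd _).
Qed.

Section S.
Variables (P E F V : finType).
Variables (dEP : E -> {set P}) (dFE : F -> {set E}) (dVF : V -> {set F}).
Hypothesis H2 : forall f : F, #|[set v | f \in dVF v]| = 2.

Lemma bnd_sd (W1 W2 : {set V}) f :
  (f \in bnd_of dVF ((W1 :\: W2) :|: (W2 :\: W1))) =
  (f \in bnd_of dVF W1) (+) (f \in bnd_of dVF W2).
Proof.
rewrite !inE -odd_symdiff; congr odd; apply: eq_card => x.
rewrite !inE.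
by case: (x \in W1); case: (x \in W2); case: (f \in dVF x).
Qed.

Lemma crossing (W : {set V}) u u' f :
  u \in W -> u' \notin W -> f \in dVF u -> f \in dVF u' -> f \in bnd_of dVF W.
Proof.
move=> uW u'W fu fu'.
have neq : u != u' by by apply/eqP => e; move: uW; rewrite e (negbTE u'W).
have eqS : [set v | f \in dVF v] = [set u; u'].
  apply/esym/eqP; rewrite eqEcard H2 cards2 neq leqnn andbT.
  by apply/subsetP => x; rewrite !inE => /orP [] /eqP ->.
have e1 : [set v in W | f \in dVF v] = [set u].
  apply/setP => x; rewrite !inE.
  have -> : (f \in dVF x) = (x == u) || (x == u') by move/setP: eqS => /(_ x); rewrite !inE.
  case: eqP => [->|_] /=; first by rewrite uW.
  by case: eqP => [->|_] /=; [rewrite (negbTE u'W)|rewrite andbF].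
by rewrite inE e1 cards1.
Qed.

Lemma path_cross (W : {set V}) (K : {set F}) v' :
  bnd_of dVF W \subset K -> v' \notin W ->
  forall fs f vs u, u \in W -> f \in dVF u -> fpath_rel dVF f fs vs ->
  last f fs \in dVF v' -> (f \in K) || has (fun g => g \in K) fs.
Proof.
move=> sK v'W; elim=> [|g fs IH] f [|w vs] u uW fu //=.
- move=> _ fv'; apply/orP; left; apply: (subsetP sK).
  exact: crossing uW v'W fu fv'.
- move=> /and3P [fw gw pr] lv.
  case wW: (w \in W).
  + by rewrite (IH g vs w wW gw pr lv) !orbT.
  + apply/orP; left; apply: (subsetP sK).
    by apply: crossing uW _ fu fw; rewrite wW.
Qed.
End S.

Theorem lemma10 (P E F V : finType)
    (dEP : E -> {set P}) (dFE : F -> {set E}) (dVF : V -> {set F})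
    (k : nat) (Xb : 'I_k -> {set F}) (Xset Eset M : {set F}) :
  closed_cell_complex3 dEP dFE dVF ->
  xlogical_basis dFE dVF Xb ->
  artificial_boundary dVF Xb Xset ->
  Eset :&: Xset = set0 ->
  xlogical dFE dVF M ->
  (exists i : 'I_k, is_xstab dVF (symdiff M (Xb i))) ->
  M \subset Eset ->
  cut_set dVF (Eset :|: Xset).
Proof.
move=> [_ _ H2 _ _] _ [Xr [HXr HXset _]] EX [_ Mns] [i [W1 HW1]] ME.
have [W2 HW2] := HXr i.
set W := (W1 :\: W2) :|: (W2 :\: W1).
have memW f : (f \in bnd_of dVF W) = (f \in M) (+) (f \in Xr i).
  rewrite bnd_sd // -HW1 -HW2 !inE.
  by case: (f \in M); case: (f \in Xb i); case: (f \in Xr i).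
have XrX : Xr i \subset Xset by rewrite HXset; apply: (bigcup_sup i).
have sK : bnd_of dVF W \subset Eset :|: Xset.
  apply/subsetP => f; rewrite memW inE.
  case fM: (f \in M); first by rewrite (subsetP ME).
  by move=> /= fX; rewrite (subsetP XrX) ?orbT.
have [hn|[f fW]] := set_0Vmem (bnd_of dVF W).
  exfalso; apply: Mns.
  have MXr : M = Xr i.
    by apply/setP => x; move/setP: hn => /(_ x); rewrite memW inE; case: (x \in M); case: (x \in Xr i).
  have M0 : M = set0.
    apply/setP => x; rewrite inE; apply/negP => xM.
    have : x \in Eset :&: Xset by rewrite inE (subsetP ME) //= (subsetP XrX) // -MXr.
    by rewrite EX inE.
  exists set0; rewrite M0; apply/setP => x; rewrite !inE.
  suff -> : [set v in (set0 : {set V}) | x \in dVF v] = set0 by rewrite cards0.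
  by apply/setP => y; rewrite !inE.
move: (fW); rewrite inE => odd1.
have [v vW fv] : exists2 v, v \in W & f \in dVF v.
  have : 0 < #|[set v in W | f \in dVF v]|.
    by case: #|_| odd1.
  by case/card_gt0P => v; rewrite inE => /andP [] ; exists v.
have [v' v'W fv'] : exists2 v', v' \notin W & f \in dVF v'.
  have hc := cardsID W [set v | f \in dVF v].
  rewrite H2 in hc.
  have e1 : [set v | f \in dVF v] :&: W = [set v in W | f \in dVF v].
    by apply/setP => y; rewrite !inE andbC.
  rewrite e1 in hc.
  have : 0 < #|[set v | f \in dVF v] :\: W|.
    move: odd1 hc; case: #|[set v | f \in dVF v] :\: W| => // ; rewrite addn0 => o h.
    by rewrite h in o.
  by case/card_gt0P => y /setDP [a b]; rewrite inE in a; exists y.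
exists v, v' => g fs vs /andP [pr _] gv lv _ _.
exact: (@path_cross _ _ _ H2 _ _ _ sK v'W _ _ _ _ vW gv pr lv).
Qed.
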